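(* Consider the setting and algorithm described in the context. Let $\gamma>0$ and $K_0\ge0$ be such that for all $k\ge K_0$: $\gamma_k=\gamma$, $\delta_k=\delta:=2\nu+L_{\nabla h}+\frac{2\|A\|^2}{\gamma}$ and $\|z^{k+1}\|\le\min\left(\frac{\varepsilon}{\gamma},\sqrt{\frac{2\varepsilon}{\gamma}}\right)$. Let $c_1:=\nu$, $c_2:=\frac{\delta(2-\beta)}{2\beta}$, $c_3:=\frac{\gamma}{2}$. Then for all $k\ge K_0+1$: (i) $\Psi(x^{k+1},z^{k+1},u^{k+1},\delta,\gamma)+\theta_kf(Kx^k)-\theta_k\big(\langle Kx^{k+1},y^{k+1}\rangle-f^*(y^{k+1})\big)\le \Psi(x^k,z^k,u^k,\delta,\gamma)-c_1\|x^k-x^{k+1}\|^2-c_2\|u^k-u^{k+1}\|^2-c_3\|z^k-z^{k+1}\|^2$; (ii) $\Psi(x^{k+1},z^{k+1},u^{k+1},\delta,\gamma)-\theta_kf(Kx^{k+1})\le -c_1\|x^k-x^{k+1}\|^2-c_2\|u^k-u^{k+1}\|^2-c_3\|z^k-z^{k+1}\|^2$.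
   Context: Setting: $\mathcal{S}\subseteq\mathbb{R}^n$ nonempty, convex, compact; $A:\mathbb{R}^n\to\mathbb{R}^s$, $K:\mathbb{R}^n\to\mathbb{R}^p$ linear with adjoints $A^*,K^*$ and operator norm $\|A\|$; $g:\mathbb{R}^s\to\mathbb{R}\cup\{+\infty\}$ proper, convex, lsc; $h:\mathbb{R}^n\to\mathbb{R}$ differentiable on an open set containing $\mathcal{S}$ with $L_{\nabla h}$-Lipschitz gradient there; $f:\mathbb{R}^p\to\mathbb{R}\cup\{+\infty\}$ proper, convex, lsc with $K(\mathcal{S})\subseteq\operatorname{int}(\operatorname{dom}f)$ and $f(Kx)>0$ on $\mathcal{S}$; $\mathcal{S}\cap A^{-1}(\operatorname{dom}g)\ne\emptyset$, $\inf_{x\in\mathcal{S}}\{g(Ax)+h(x)\}>0$; $A(\mathcal{S})\subseteq\operatorname{dom}(\partial g)$ and there is $\ell>0$ with $\operatorname{dist}(0,\partial g(Ax))\le\ell$ for all $x\in\mathcal{S}$. Notation: $f^*,g^*$ Fenchel conjugates; $\iota_{\mathcal{S}}$ indicator; $\operatorname{Proj}_{\mathcal{S}}$ projection; $\operatorname{prox}_{\varphi,\kappa}(x)=\arg\min_y\{\varphi(y)+\frac1{2\kappa}\|y-x\|^2\}$; $\Psi(x,z,u,\delta,\gamma):=\langle z,Ax\rangle-g^*(z)+h(x)+\iota_{\mathcal{S}}(x)+\frac{\delta}{2}\|x-u\|^2-\frac{\gamma}{2}\|z\|^2$. Algorithm: given $0<\beta<2$, $\nu>0$, $0<q<1$,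 $\delta_0,\theta_0>0$, $\gamma_0=1$, $\varepsilon>0$ and $(x^0,z^0,u^0)$, for $k\ge0$: choose $y^{k+1}\in\partial f(Kx^k)$; $x^{k+1}:=\operatorname{Proj}_{\mathcal{S}}(u^k+\frac{\theta_k}{\delta_k}K^*y^{k+1}-\frac1{\delta_k}\nabla h(x^k)-\frac1{\delta_k}A^*z^k)$; $u^{k+1}:=(1-\beta)u^k+\beta x^{k+1}$; take the smallest $j_k\ge0$ such that with $\gamma_{k,j_k}:=\gamma_kq^{j_k}$, $z^{k+1,j_k}:=\operatorname{prox}_{g^*,1/\gamma_{k,j_k}}(Ax^{k+1}/\gamma_{k,j_k})$ one has $\theta_{k+1}:=\Psi(x^{k+1},z^{k+1,j_k},u^{k+1},\delta_k,\gamma_{k,j_k})/f(Kx^{k+1})>0$; set $\gamma_{k+1}:=\gamma_{k,j_k}$, $\delta_{k+1}:=2\nu+L_{\nabla h}+2\|A\|^2/\gamma_{k+1}$, $z^{k+1}:=z^{k+1,j_k}$; if $\|z^{k+1}\|>\min(\varepsilon/\gamma_{k+1},\sqrt{2\varepsilon/\gamma_{k+1}})$, replace $\gamma_{k+1}$ by $\gamma_{k+1}q$ and recompute $\delta_{k+1}$ by the same formula. *)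

(* Defs.v *)
(* R : realType, vectors of R^n are row vectors 'rV[R]_n,
   linear maps R^n -> R^s are matrices A : 'M[R]_(n,s) acting by x |-> x *m A,
   with adjoint z |-> z *m A^T. *)
From HB Require Import structures.
From mathcomp Require Import all_boot all_order all_algebra.
From mathcomp Require Import all_classical all_reals all_analysis.
Set Implicit Arguments. Unset Strict Implicit. Unset Printing Implicit Defensive.
Import Order.TTheory GRing.Theory Num.Theory.
Import numFieldNormedType.Exports.
Local Open Scope classical_set_scope.
Local Open Scope ring_scope.

Section Defs.
Variable R : realType.

Definition dot {n} (u v : 'rV[R]_n) : R := \sum_(i < n) u ord0 i * v ord0 i.
Definition enorm {n} (u : 'rV[R]_n) : R := Num.sqrt (dot u u).

Definition opnorm {n s} (A : 'M[R]_(n, s)) : R :=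
  sup [set enorm (x *m A) | x in [set x : 'rV[R]_n | enorm x <= 1]].

Local Open Scope ereal_scope.

Definition dom {n} (f : 'rV[R]_n -> \bar R) : set 'rV[R]_n := [set x | f x < +oo].

Definition proper_fun {n} (f : 'rV[R]_n -> \bar R) : Prop :=
  (exists x, f x \is a fin_num) /\ (forall x, f x != -oo).

Definition convex_fun {n} (f : 'rV[R]_n -> \bar R) : Prop :=
  forall x y (t : R), (0 < t < 1)%R ->
    f (t *: x + (1 - t) *: y)%R <= t%:E * f x + (1 - t)%:E * f y.

Definition fconj {n} (f : 'rV[R]_n -> \bar R) (y : 'rV[R]_n) : \bar R :=
  ereal_sup [set (dot x y)%:E - f x | x in [set: 'rV[R]_n]].

Definition subdiff {n} (f : 'rV[R]_n -> \bar R) (x w : 'rV[R]_n) : Prop :=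
  f x \is a fin_num /\ forall v, f x + (dot w (v - x)%R)%:E <= f v.

Definition dist0 {n} (C : set 'rV[R]_n) : R := inf [set enorm w | w in C].

Definition indic {n} (S : set 'rV[R]_n) (x : 'rV[R]_n) : \bar R :=
  if `[< S x >] then 0 else +oo.

(* Euclidean projection onto S (chosen by global choice; unique for nonempty
   closed convex S) *)
Definition Proj {n} (S : set 'rV[R]_n) (x : 'rV[R]_n) : 'rV[R]_n :=
  xget (0%R : 'rV[R]_n) [set p | S p /\ forall w, S w -> (enorm (p - x) <= enorm (w - x))%R].

Definition prox {n} (phi : 'rV[R]_n -> \bar R) (kappa : R) (x : 'rV[R]_n)
  : 'rV[R]_n :=
  xget (0%R : 'rV[R]_n) [set p | forall w, phi p + ((2 * kappa)^-1 * enorm (p - x) ^+ 2)%R%:E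
                          <= phi w + ((2 * kappa)^-1 * enorm (w - x) ^+ 2)%R%:E].

Definition Psi {n s} (A : 'M[R]_(n, s)) (gstar : 'rV[R]_s -> \bar R)
  (h : 'rV[R]_n -> R) (S : set 'rV[R]_n)
  (x : 'rV[R]_n) (z : 'rV[R]_s) (u : 'rV[R]_n) (delta gamma : R) : \bar R :=
  (dot z (x *m A))%:E - gstar z + (h x)%:E + indic S x
  + (delta / 2 * enorm (x - u) ^+ 2)%R%:E - (gamma / 2 * enorm z ^+ 2)%R%:E.

Definition alg_run {n s p} (S : set 'rV[R]_n) (A : 'M[R]_(n, s)) (K : 'M[R]_(n, p))
  (g : 'rV[R]_s -> \bar R) (h : 'rV[R]_n -> R) (gradh : 'rV[R]_n -> 'rV[R]_n)
  (L : R) (f : 'rV[R]_p -> \bar R)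
  (beta nu q delta0 theta0 eps : R)
  (x u : nat -> 'rV[R]_n) (z : nat -> 'rV[R]_s) (y : nat -> 'rV[R]_p)
  (gam del th : nat -> R) : Prop :=
  [/\ gam 0%N = 1%R, del 0%N = delta0, th 0%N = theta0 &
   forall k : nat,
   let gk i := (gam k * q ^+ i)%R in
   let zc i := prox (fconj g) (gk i)^-1 ((gk i)^-1 *: (x k.+1 *m A)) in
   let thc i := (fine (Psi A (fconj g) h S (x k.+1) (zc i) (u k.+1) (del k) (gk i))
                 / fine (f (x k.+1 *m K)))%R in
   [/\ subdiff f (x k *m K) (y k.+1),
       x k.+1 = Proj S (u k + (th k / del k) *: (y k.+1 *m K^T)
                        - (del k)^-1 *: gradh (x k) - (del k)^-1 *: (z k *m A^T))%R,
       u k.+1 = ((1 - beta) *: u k + beta *: x k.+1)%R &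
       exists j : nat,
       [/\ (forall i, (i < j)%N -> ~ (0 < thc i)%R), (0 < thc j)%R,
           z k.+1 = zc j /\ th k.+1 = thc j,
           gam k.+1 = (if (Num.min (eps / gk j) (Num.sqrt (2 * eps / gk j))
                             < enorm (z k.+1))%R
                       then gk j * q else gk j)%R
         & del k.+1 = (2 * nu + L + 2 * opnorm A ^+ 2 / gam k.+1)%R]]].

End Defs.

(* Main.v *)
Require Import Defs.
From HB Require Import structures.
From mathcomp Require Import all_boot all_order all_algebra.
From mathcomp Require Import all_classical all_reals all_analysis.
From mathcomp Require Import lra ring.
Import Order.TTheory GRing.Theory Num.Theory.
Import numFieldNormedType.Exports.
Set Implicit Arguments. Unset Strict Implicit. Unset Printing Implicit Defensive.
Local Open Scope classical_set_scope.
Local Open Scope ring_scope.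

Section Aux.
Variable R : realType.

Lemma dotC m (u v : 'rV[R]_m) : dot u v = dot v u.
Proof. by rewrite /dot; apply: eq_bigr => i _; rewrite mulrC. Qed.

Lemma dotDl m (u v w : 'rV[R]_m) : dot (u + v) w = dot u w + dot v w.
Proof. by rewrite /dot -big_split; apply: eq_bigr => i _; rewrite mxE mulrDl. Qed.

Lemma dotZl m a (u w : 'rV[R]_m) : dot (a *: u) w = a * dot u w.
Proof. by rewrite /dot mulr_sumr; apply: eq_bigr => i _; rewrite mxE mulrA. Qed.

Lemma dotNl m (u w : 'rV[R]_m) : dot (- u) w = - dot u w.
Proof. by rewrite -scaleN1r dotZl mulN1r. Qed.

Lemma dotBl m (u v w : 'rV[R]_m) : dot (u - v) w = dot u w - dot v w.
Proof. by rewrite dotDl dotNl. Qed.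

Lemma dotDr m (u v w : 'rV[R]_m) : dot w (u + v) = dot w u + dot w v.
Proof. by rewrite dotC dotDl !(dotC w). Qed.

Lemma dotZr m a (u w : 'rV[R]_m) : dot w (a *: u) = a * dot w u.
Proof. by rewrite dotC dotZl dotC. Qed.

Lemma dotNr m (u w : 'rV[R]_m) : dot w (- u) = - dot w u.
Proof. by rewrite dotC dotNl dotC. Qed.

Lemma dotBr m (u v w : 'rV[R]_m) : dot w (u - v) = dot w u - dot w v.
Proof. by rewrite dotDr dotNr. Qed.

Lemma dot0l m (w : 'rV[R]_m) : dot 0 w = 0.
Proof. by rewrite /dot big1 // => i _; rewrite mxE mul0r. Qed.

Lemma dot_ge0 m (u : 'rV[R]_m) : 0 <= dot u u.
Proof. by rewrite /dot sumr_ge0 // => i _; rewrite -expr2 sqr_ge0. Qed.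

Lemma enorm_sq m (u : 'rV[R]_m) : enorm u ^+ 2 = dot u u.
Proof. by rewrite /enorm sqr_sqrtr // dot_ge0. Qed.

Lemma enorm_ge0 m (u : 'rV[R]_m) : 0 <= enorm u.
Proof. exact: sqrtr_ge0. Qed.

Lemma dot_mulmx m k (z : 'rV[R]_k) (x : 'rV[R]_m) (A : 'M[R]_(m, k)) :
  dot z (x *m A) = dot (z *m A^T) x.
Proof.
rewrite /dot.
under eq_bigr do rewrite mxE mulr_sumr.
rewrite exchange_big /=; apply: eq_bigr => i _.
rewrite mxE mulr_suml; apply: eq_bigr => j _.
by rewrite mxE; ring.
Qed.

Lemma dot_expand m (e d : 'rV[R]_m) t :
  dot (e + t *: d) (e + t *: d) = dot e e + 2 * t * dot e d + t ^+ 2 * dot d d.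
Proof.
rewrite !dotDl !dotDr !dotZl !dotZr (dotC d e); ring.
Qed.

Lemma coord_sq_le m (u : 'rV[R]_m) i : (u ord0 i) ^+ 2 <= dot u u.
Proof.
rewrite /dot (bigD1 i) //= -expr2 lerDl sumr_ge0 // => j _.
by rewrite -expr2 sqr_ge0.
Qed.

Lemma dot_sq_le m (u v : 'rV[R]_m) : dot u v ^+ 2 <= dot u u * dot v v.
Proof.
have H t : 0 <= dot u u * t ^+ 2 - 2 * dot u v * t + dot v v.
  have := dot_ge0 (v + (- t) *: u); rewrite dot_expand (dotC v u).
  by move=> h; apply: le_trans h _; rewrite le_eqVlt; apply/orP; left; apply/eqP; ring.
have [uu0|uupos] := eqVneq (dot u u) 0.
  have [uv0|uvn0] := eqVneq (dot u v) 0.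
    by rewrite uv0 uu0 expr2 !mul0r.
  have := H ((dot v v + 1) / (2 * dot u v)); rewrite uu0 mul0r add0r.
  have e : 2 * dot u v * ((dot v v + 1) / (2 * dot u v)) = dot v v + 1.
    by field; rewrite uvn0.
  rewrite e; lra.
have up : 0 < dot u u by rewrite lt_neqAle eq_sym uupos dot_ge0.
have := H (dot u v / dot u u).
rewrite expr_div_n !mulrA (mulrC (dot u u)) -(mulrA _ (dot u u)) .
move=> h.
have : 0 <= (dot u u * dot v v - dot u v ^+ 2) / dot u u.
  apply: le_trans h _; rewrite le_eqVlt; apply/orP; left; apply/eqP.
  by field; rewrite gt_eqF.
by rewrite pmulr_lge0 ?invr_gt0 // subr_ge0.
Qed.

Lemma CS m (u v : 'rV[R]_m) : dot u v <= enorm u * enorm v.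
Proof.
rewrite /enorm -sqrtrM ?dot_ge0 //.
apply: le_trans (ler_norm _) _.
by rewrite -sqrtr_sqr ler_sqrt ?mulr_ge0 ?dot_ge0 // dot_sq_le.
Qed.

Lemma young m (a b : 'rV[R]_m) g : 0 < g -> dot a b <= g / 2 * dot a a + (2 * g)^-1 * dot b b.
Proof.
move=> gp; have := dot_ge0 (g *: a - b).
rewrite !dotBl !dotBr !dotZl !dotZr (dotC b a) => h.
rewrite -subr_ge0.
have -> : g / 2 * dot a a + (2 * g)^-1 * dot b b - dot a b =
   (2 * g)^-1 * (g * (g * dot a a) - g * dot a b - (g * dot a b - dot b b)).
  by field; rewrite gt_eqF.
by rewrite mulr_ge0 // invr_ge0 mulr_ge0 // ltW.
Qed.


Lemma le_lim_t (a b k : R) : 0 <= k -> (forall t : R, 0 < t < 1 -> a <= b + t * k) -> a <= b.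
Proof.
move=> k0 H; rewrite leNgt; apply/negP => ba.
set e := a - b.
have e0 : 0 < e by rewrite subr_gt0.
have d0 : 0 < 2 * e + k by lra.
have := H (e / (2 * e + k)).
have t0 : 0 < e / (2 * e + k) by rewrite divr_gt0.
have t1 : e / (2 * e + k) < 1 by rewrite ltr_pdivrMr // mul1r; lra.
rewrite t0 t1 => /(_ isT).
have : e / (2 * e + k) * k < e.
  rewrite mulrAC ltr_pdivrMr // ; nra.
rewrite /e; lra.
Qed.

Lemma three_point m (C : set 'rV[R]_m) (G : 'rV[R]_m -> \bar R) (g : R)
  (c z w : 'rV[R]_m) (a b : R) :
  0 < g -> G z = a%:E -> G w = b%:E ->
  (forall t : R, 0 < t < 1 -> C (t *: w + (1 - t) *: z) /\
      (G (t *: w + (1 - t) *: z)%R <= (t * b + (1 - t) * a)%R%:E)%E) ->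
  (forall v, C v -> (G z + (g / 2 * dot (z - c) (z - c))%R%:E
                    <= G v + (g / 2 * dot (v - c) (v - c))%R%:E)%E) ->
  a + g / 2 * dot (z - c) (z - c) + g / 2 * dot (w - z) (w - z)
    <= b + g / 2 * dot (w - c) (w - c).
Proof.
move=> g0 Gz Gw Hc Hmin.
set e := z - c; set d := w - z.
have wc : w - c = e + 1 *: d.
  by rewrite scale1r /e /d; apply/rowP => i; rewrite !mxE; ring.
have key : a <= b + g * dot e d.
  apply: (@le_lim_t _ _ (g / 2 * dot d d)); first by rewrite mulr_ge0 ?dot_ge0 // divr_ge0 // ltW.
  move=> t /andP[t0 t1].
  have [Ct Gt] := Hc t (introT andP (conj t0 t1)).
  have := Hmin _ Ct.
  have -> : t *: w + (1 - t) *: z - c = e + t *: d.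
    by rewrite /e /d scalerBr scalerBl scale1r; apply/rowP => i; rewrite !mxE; ring.
  rewrite Gz dot_expand -/e => h.
  have h2 : ((a + g / 2 * dot e e)%:E <= ((t * b + (1 - t) * a) + g / 2 * (dot e e + 2 * t * dot e d + t ^+ 2 * dot d d))%:E)%E.
    rewrite EFinD; apply: le_trans h _; rewrite EFinD; exact: leeD2r.
  rewrite lee_fin in h2.
  have E : t * (b + g * dot e d + t * (g / 2 * dot d d) - a) =
    ((t * b + (1 - t) * a) + g / 2 * (dot e e + 2 * t * dot e d + t ^+ 2 * dot d d)) - (a + g / 2 * dot e e).
    by field.
  have : 0 <= t * (b + g * dot e d + t * (g / 2 * dot d d) - a) by rewrite E subr_ge0.
  by rewrite pmulr_rge0 // subr_ge0.
rewrite wc dot_expand expr1n mul1r mulr1.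
have -> : g / 2 * (dot e e + 2 * dot e d + dot d d) = g / 2 * dot e e + g * dot e d + g / 2 * dot d d by field.
lra.
Qed.


Lemma ereal_between (a b : \bar R) : (a < b)%E -> exists r : R, (a < r%:E)%E /\ (r%:E < b)%E.
Proof.
case: a => [x||]; case: b => [y||] //=.
- rewrite lte_fin => xy; exists ((x + y) / 2); rewrite !lte_fin; split; lra.
- by move=> _; exists (x + 1); rewrite lte_fin ltry; split => //; lra.
- by move=> _; exists (y - 1); rewrite lte_fin ltNyr; split => //; lra.
- by move=> _; exists 0; rewrite ltNyr ltry.
Qed.

Lemma exists_min (T : topologicalType) (C : set T) (F : T -> \bar R) :
  compact C -> C !=set0 ->
  (forall w (r : R), (r%:E < F w)%E -> \forall v \near w, (r%:E < F v)%E) ->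
  exists2 z, C z & forall v, C v -> (F z <= F v)%E.
Proof.
move=> cpt C0 lsc.
set m := ereal_inf (F @` C).
suff [z Cz Fz] : exists2 z, C z & (F z <= m)%E.
  exists z => // v Cv; apply: le_trans Fz _; apply: ereal_inf_lbound; exists v => //.
have [mpoo|mnpoo] := eqVneq m +oo%E.
  by case: C0 => z Cz; exists z => //; rewrite mpoo leey.
pose D := [set r : R | (m < r%:E)%E].
pose B := fun r : R => C `&` [set v | (F v < r%:E)%E].
have D0 : exists i, D i.
  have : (m < +oo)%E by rewrite ltey.
  by move/ereal_between => [r [mr _]]; exists r.
have FF : ProperFilter (filter_from D B).
  apply: filter_from_proper.
    apply: filter_from_filter => // i j Di Dj.
    have [ij|ji] := leP i j.
      exists i => // v [Cv Fv]; split; split => //.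
      by apply: lt_le_trans Fv _; rewrite lee_fin.
    exists j => // v [Cv Fv]; split; split => //.
    by apply: lt_le_trans Fv _; rewrite lee_fin ltW.
  move=> r Dr; have [_ [v Cv <-] Fv] := ereal_inf_lt Dr.
  by exists v.
have FC : filter_from D B C by case: D0 => i Di; exists i => // v [].
have [z [Cz clz]] := cpt _ FF FC.
exists z => //; rewrite leNgt; apply/negP => mz.
have [r [mr rz]] := ereal_between mz.
have nb := lsc z r rz.
have [v [[Cv Fvr] rFv]] := clz (B r) _ (ex_intro2 _ _ r mr (@subset_refl _ _)) nb.
by move: (lt_trans rFv Fvr); rewrite ltxx.
Qed.


Lemma cont_sum m (F : 'I_m -> 'rV[R]_m -> R) :
  (forall i, continuous (F i)) -> continuous (fun v => \sum_(i < m) F i v).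
Proof.
move=> Fc; rewrite -fct_sumE.
apply: (@big_ind _ (fun f : 'rV[R]_m -> R => continuous f)) => //.
- by move=> x; apply: cst_continuous.
- by move=> f g fc gc x; exact: continuousD (fc x) (gc x).
Qed.

Lemma cont_dot m (a : 'rV[R]_m) : continuous (fun v : 'rV[R]_m => dot a v).
Proof.
apply: (@cont_sum _ (fun i v => a ord0 i * v ord0 i)) => i x.
apply: (@continuousM _ _ (cst (a ord0 i)) (fun v : 'rV[R]_m => v ord0 i)).
  exact: cst_continuous.
exact: coord_continuous.
Qed.

Lemma cont_sq m (c : 'rV[R]_m) : continuous (fun v : 'rV[R]_m => dot (v - c) (v - c)).
Proof.
apply: (@cont_sum _ (fun i v => (v - c) ord0 i * (v - c) ord0 i)) => i x.
have ci : continuous (fun v : 'rV[R]_m => (v - c) ord0 i).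
  move=> y; rewrite (_ : (fun v : 'rV[R]_m => (v - c) ord0 i) = (fun v => v ord0 i) + cst (- c ord0 i)).
    apply: (@continuousD _ R^o _ (fun v : 'rV[R]_m => v ord0 i) (cst (- c ord0 i))).
      exact: coord_continuous.
    exact: cst_continuous.
  by apply/funext => v; rewrite !mxE.
exact: (@continuousM _ _ (fun v : 'rV[R]_m => (v - c) ord0 i) (fun v : 'rV[R]_m => (v - c) ord0 i) _ (ci x) (ci x)).
Qed.

Lemma cont_near_gt (T : topologicalType) (f : T -> R) w r :
  {for w, continuous f} -> r < f w -> \forall v \near w, r < f v.
Proof.
move=> fc rf.
have : nbhs (f w) [set y | r < y] by apply: open_nbhs_nbhs; split => //; exact: open_gt.
by move/fc.
Qed.


Lemma convS m (S : set 'rV[R]_m) : convex.convex_set S ->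
  forall w z (t : R), S w -> S z -> 0 <= t <= 1 -> S (t *: w + (1 - t) *: z).
Proof.
move=> cS w z t Sw Sz /andP[t0 t1].
have := cS w z (Itv01 t0 t1) (mem_set Sw) (mem_set Sz).
by rewrite inE.
Qed.

Lemma proj_prop m (S : set 'rV[R]_m) (v : 'rV[R]_m) :
  compact S -> S !=set0 -> convex.convex_set S ->
  S (Proj S v) /\ forall w, S w ->
    dot (Proj S v - v) (Proj S v - v) + dot (w - Proj S v) (w - Proj S v)
      <= dot (w - v) (w - v).
Proof.
move=> cpt S0 cS.
have [z Sz zmin] := @exists_min _ S (fun w => (dot (w - v) (w - v))%:E) cpt S0
  (fun w r rlt => filterS (fun y (h : r < dot (y - v) (y - v)) => (introT idP (h : (r%:E < (dot (y - v) (y - v))%:E)%E)))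
                    (cont_near_gt (@cont_sq m v w) (rlt : r < _))).
have ex : exists p, S p /\ forall w, S w -> enorm (p - v) <= enorm (w - v).
  exists z; split => // w Sw; rewrite /enorm ler_sqrt ?dot_ge0 //.
  by have := zmin w Sw; rewrite lee_fin.
have [SP Pmin] := xgetPex 0 ex.
rewrite /Proj; split => // w Sw.
set P := xget _ _ in SP Pmin *.
have two0 : (0 : R) < 2 by [].
have := @three_point m S (fun _ => 0%:E) 2 v P w 0 0 two0 erefl erefl.
have e22 : (2 : R) / 2 = 1 by rewrite divff.
rewrite e22 !mul1r !add0r; apply.
  move=> t /andP[t0 t1]; split; last by rewrite !mulr0 addr0.
  by apply: convS => //; rewrite !ltW.
move=> w' Sw'; rewrite !add0e lee_fin !mul1r -!enorm_sq expr2 [X in _ <= X]expr2.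
by apply: ler_pM; rewrite ?enorm_ge0 ?Pmin.
Qed.


Lemma fconj_ge m (g : 'rV[R]_m -> \bar R) x w : ((dot x w)%:E - g x <= fconj g w)%E.
Proof. by apply: ereal_sup_ubound; exists x. Qed.

Lemma fconj_convex m (g : 'rV[R]_m -> \bar R) (w z : 'rV[R]_m) (a b t : R) :
  proper_fun g -> fconj g w = b%:E -> fconj g z = a%:E -> 0 <= t <= 1 ->
  (fconj g (t *: w + (1 - t) *: z) <= (t * b + (1 - t) * a)%:E)%E.
Proof.
move=> [_ gNy] Fw Fz /andP[t0 t1].
apply: ge_ereal_sup => _ [x _ <-].
have hw := fconj_ge g x w; have hz := fconj_ge g x z.
rewrite Fw in hw; rewrite Fz in hz.
move: hw hz (gNy x); case: (g x) => [gx| |] //.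
- rewrite !lee_fin => hw hz _.
  rewrite dotDr !dotZr.
  have h1 : 0 <= t * (b - (dot x w - gx)) by rewrite mulr_ge0 // subr_ge0.
  have h2 : 0 <= (1 - t) * (a - (dot x z - gx)) by rewrite mulr_ge0 // subr_ge0.
  lra.
- by move=> *; rewrite /= leNye.
Qed.


Lemma abs_le_sq1 (y : R) : `|y| <= y ^+ 2 + 1.
Proof.
have -> : y ^+ 2 = `|y| ^+ 2 by rewrite real_normK // num_real.
have := normr_ge0 y; set a := `|y|; nra.
Qed.

Lemma prox_min m (g : 'rV[R]_m -> \bar R) (gam : R) (c w0 : 'rV[R]_m) :
  0 < gam -> proper_fun g -> fconj g w0 \is a fin_num ->
  exists p, forall w, (fconj g p + (gam / 2 * dot (p - c) (p - c))%:E
     <= fconj g w + (gam / 2 * dot (w - c) (w - c))%:E)%E.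
Proof.
move=> gam0 [[x0 gx0fin] gNy] w0fin.
pose q := fun w => gam / 2 * dot (w - c) (w - c).
pose F := fun w => (fconj g w + (q w)%:E)%E.
have [g0 eg0] := EFin_fin_numP _ gx0fin.
have [G0 eG0] := EFin_fin_numP _ w0fin.
pose V := G0 + q w0.
pose B := V + g0 - dot x0 c + gam^-1 * dot x0 x0.
pose M := 4 * B / gam.
pose rho := `|M| + 1.
pose C := [set v : 'rV[R]_m | forall i, `[c ord0 i - rho, c ord0 i + rho]%classic (v ord0 i)].
have Ccpt : compact C.
  by apply: (@rV_compact _ _ (fun i => `[c ord0 i - rho, c ord0 i + rho]%classic)) => i; exact: segment_compact.
have rho0 : 0 < rho by rewrite /rho; have := normr_ge0 M; lra.
have C0 : C !=set0.
  exists c => i /=; rewrite in_itv /=; apply/andP; split; lra.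
have claim : forall v, (F v <= V%:E)%E -> C v.
  move=> v Fv i.
  have h1 : ((dot x0 v - g0 + q v)%:E <= V%:E)%E.
    apply: le_trans Fv; rewrite /F EFinD; apply: leeD2r.
    by have := fconj_ge g x0 v; rewrite eg0.
  rewrite lee_fin in h1.
  have g20 : 0 < gam / 2 by rewrite divr_gt0.
  have hy := young (v - c) (- x0) g20.
  rewrite dotNr dotNl dotNr opprK (dotC (v - c)) in hy.
  have ex : dot x0 v = dot x0 (v - c) + dot x0 c by rewrite dotBr; ring.
  set dd := dot (v - c) (v - c) in h1 hy.
  have e1 : q v = 2 * (gam / 4 * dd) by rewrite /q /dd; field.
  have e2 : gam / 2 / 2 * dd = gam / 4 * dd by field.
  have e3 : (2 * (gam / 2))^-1 = gam^-1 by congr (_^-1); field.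
  rewrite e1 in h1; rewrite e2 e3 in hy.
  have hB : gam / 4 * dd <= B by rewrite /B; lra.
  have hM : dd <= M.
    rewrite /M ler_pdivlMr //.
    have -> : dd * gam = 4 * (gam / 4 * dd) by field.
    lra.
  have hc := coord_sq_le (v - c) i.
  rewrite -/dd !mxE in hc.
  have ha := abs_le_sq1 (v ord0 i - c ord0 i).
  have hn := ler_norm M.
  have : `|v ord0 i - c ord0 i| <= rho by rewrite /rho; lra.
  rewrite ler_distl => /andP[l1 l2].
  by rewrite /= in_itv /=; apply/andP; split; lra.
have lsc : forall w (r : R), (r%:E < F w)%E -> \forall v \near w, (r%:E < F v)%E.
  move=> w r rF.
  have : ((r - q w)%:E < fconj g w)%E.
    by rewrite EFinB lteBlDr //; rewrite addeC.
  move/ereal_sup_gt => [_ [x _ <-]].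
  move: (gNy x) (fconj_ge g x).
  case E: (g x) => [gx| |] //= _ hx.
  rewrite -EFinD lte_fin => rlt.
  have phic : continuous (fun v => dot x v + q v).
    move=> y; apply: (@continuousD _ R^o _ (fun v => dot x v) q).
      exact: cont_dot.
    have -> : q = cst (gam / 2) \* (fun v => dot (v - c) (v - c)) by [].
    exact: (@continuousM _ _ (cst (gam / 2)) (fun v : 'rV[R]_m => dot (v - c) (v - c)) y
       (@cst_continuous _ _ _ y) (@cont_sq m c y)).
  have := cont_near_gt (phic w) (_ : r + gx < dot x w + q w).
  move=> /(_ ltac:(lra)); apply: filterS => v hv.
  apply: (@lt_le_trans _ _ ((dot x v - gx) + q v)%:E).
    by rewrite lte_fin; lra.
  by rewrite EFinD /F; apply: leeD2r; have := hx v.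
have [z Cz zmin] := exists_min Ccpt C0 lsc.
have Fw0 : F w0 = V%:E by rewrite /F eG0 -EFinD.
have Cw0 : C w0 by apply: claim; rewrite Fw0.
exists z => w.
have [Cw|nCw] := pselect (C w); first exact: zmin.
have : ~ (F w <= V%:E)%E by move=> /claim.
move/negP; rewrite -ltNge => Vw.
apply: le_trans (zmin _ Cw0) _; rewrite Fw0; exact: ltW.
Qed.


Lemma prox_3pt m (g : 'rV[R]_m -> \bar R) (gam : R) (c w : 'rV[R]_m) (a b : R) :
  0 < gam -> proper_fun g ->
  fconj g (prox (fconj g) gam^-1 c) = a%:E -> fconj g w = b%:E ->
  a + gam / 2 * dot (prox (fconj g) gam^-1 c - c) (prox (fconj g) gam^-1 c - c)
    + gam / 2 * dot (w - prox (fconj g) gam^-1 c) (w - prox (fconj g) gam^-1 c)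
  <= b + gam / 2 * dot (w - c) (w - c).
Proof.
move=> gam0 gp Fz Fw.
set z := prox _ _ _ in Fz *.
have zfin : fconj g z \is a fin_num by rewrite Fz.
have ex := prox_min c gam0 gp zfin.
have e : (2 * gam^-1)^-1 = gam / 2 by rewrite invfM invrK mulrC.
have zmin : forall w', (fconj g z + (gam / 2 * dot (z - c) (z - c))%:E
     <= fconj g w' + (gam / 2 * dot (w' - c) (w' - c))%:E)%E.
  case: ex => p Hp.
  have : exists p0, forall w0, (fconj g p0 + ((2 * gam^-1)^-1 * enorm (p0 - c) ^+ 2)%:E
      <= fconj g w0 + ((2 * gam^-1)^-1 * enorm (w0 - c) ^+ 2)%:E)%E.
    by exists p => w0; rewrite e !enorm_sq.
  move/(xgetPex 0) => H w'.
  by rewrite -e -!enorm_sq; exact: H.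
have H3 := @three_point m setT (fconj g) gam c z w a b gam0 Fz Fw.
apply: H3; last by move=> v _; exact: zmin.
move=> t /andP[t0 t1]; split => //.
by apply: fconj_convex => //; rewrite !ltW.
Qed.


Lemma enorm_scale m t (d : 'rV[R]_m) : enorm (t *: d) = `|t| * enorm d.
Proof.
rewrite /enorm dotZl dotZr mulrA -expr2 sqrtrM ?sqr_ge0 //.
by rewrite sqrtr_sqr.
Qed.

Lemma h_descent m (h : 'rV[R]_m -> R) (gradh : 'rV[R]_m -> 'rV[R]_m) (U : set 'rV[R]_m)
  (L : R) (x y : 'rV[R]_m) :
  (forall x, U x -> differentiable h x /\ forall v, 'D_v h x = dot (gradh x) v) ->
  (forall x w, U x -> U w -> enorm (gradh x - gradh w) <= L * enorm (x - w)) ->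
  0 <= L ->
  (forall t : R, 0 <= t <= 1 -> U (x + t *: (y - x))) ->
  h y <= h x + dot (gradh x) (y - x) + L / 2 * dot (y - x) (y - x).
Proof.
move=> Hd HL L0 Hseg.
set d := y - x.
pose g := fun t : R => h (x + t *: d).
have gD : forall t : R, 0 <= t <= 1 -> is_derive t 1 g (dot (gradh (x + t *: d)) d).
  move=> t t01; have [dh Dh] := Hd _ (Hseg t t01).
  have E : (fun s : R => s^-1 *: ((g \o shift t) (s *: 1) - g t)) =
           (fun s : R => s^-1 *: ((h \o shift (x + t *: d)) (s *: d) - h (x + t *: d))).
    apply/funext => s /=; rewrite /g; congr (_ *: (_ - _)); congr h.
    by rewrite -[s%:A]/(s * 1) mulr1 scalerDl addrCA.
  apply: DeriveDef.
    by move: (@diff_derivable _ _ _ h _ d dh); rewrite /derivable E.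
  by rewrite /derive E -Dh.
pose a0 := dot (gradh x) d; pose c0 := L / 2 * dot d d.
pose phi := g - a0 *: (@id R) - c0 *: ((@id R) * (@id R)).
have phiD : forall t : R, 0 <= t <= 1 -> is_derive t 1 phi
   (dot (gradh (x + t *: d)) d - a0 *: 1 - c0 *: (t *: 1 + t *: 1)).
  move=> t t01.
  exact: (is_deriveB (is_deriveB (gD t t01) (is_deriveZ a0 (is_derive_id t 1)))
          (is_deriveZ c0 (is_deriveM (is_derive_id t 1) (is_derive_id t 1)))).
have phin : phi 1 <= phi 0.
  apply: (@ler0_derive1_nincr _ phi 0 1) => //.
  - move=> t; rewrite in_itv /= => /andP[t0 t1].
    by have [] := phiD t (introT andP (conj (ltW t0) (ltW t1))).
  - move=> t; rewrite in_itv /= => /andP[t0 t1].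
    have t01 : 0 <= t <= 1 by rewrite !ltW.
    rewrite derive1E (@derive_val _ _ _ _ _ _ _ (phiD t t01)).
    rewrite -[a0%:A]/(a0 * 1) -[t%:A]/(t * 1) -[c0 *: _]/(c0 * _) !mulr1.
    have Ux : U x by have := Hseg 0; rewrite scale0r addr0; apply; rewrite lexx ler01.
    have hl := HL _ _ (Hseg t t01) Ux.
    have hcs := CS (gradh (x + t *: d) - gradh x) d.
    rewrite dotBl -/a0 in hcs.
    rewrite (_ : x + t *: d - x = t *: d) in hl; last by rewrite addrAC subrr add0r.
    rewrite enorm_scale (ger0_norm (ltW t0)) in hl.
    have h2 : enorm (gradh (x + t *: d) - gradh x) * enorm d <= L * (t * enorm d) * enorm d.
      by apply: ler_wpM2r; [exact: enorm_ge0 | exact: hl].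
    have e2 : L * (t * enorm d) * enorm d = c0 * (t + t).
      by rewrite /c0 -enorm_sq expr2; field.
    lra.
  - apply: (@derivable_within_continuous _ _ phi `[0, 1]) => t; rewrite in_itv /= => t01.
    by have [] := phiD t t01.
have e1 : phi 1 = h (x + 1 *: d) - a0 * 1 - c0 * (1 * 1) by [].
have e0 : phi 0 = h (x + 0 *: d) - a0 * 0 - c0 * (0 * 0) by [].
move: phin; rewrite e1 e0 scale1r scale0r addr0 /d (_ : x + (y - x) = y); last by rewrite addrC subrK.
rewrite !mulr1 !mulr0 !subr0.
rewrite -/d /a0 /c0; lra.
Qed.


Lemma enorm0_eq m (x : 'rV[R]_m) : enorm x = 0 -> x = 0.
Proof.
move=> e0; have dd : dot x x = 0 by rewrite -enorm_sq e0 expr2 mul0r.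
apply/rowP => i; rewrite mxE.
have := coord_sq_le x i; rewrite dd => h.
have : (x ord0 i) ^+ 2 = 0 by apply/eqP; rewrite eq_le h sqr_ge0.
by move/eqP; rewrite sqrf_eq0 => /eqP.
Qed.

Lemma opnorm_bound m k (A : 'M[R]_(m, k)) (x : 'rV[R]_m) :
  enorm (x *m A) <= opnorm A * enorm x.
Proof.
set E := [set enorm (x *m A) | x in [set x : 'rV[R]_m | enorm x <= 1]].
have hub : has_ubound E.
  exists (Num.sqrt (\sum_(j < k) (\sum_(i < m) 2 * `|A i j|) ^+ 2)).
  move=> _ [y y1 <-]; rewrite /enorm ler_sqrt; last first.
    by apply: sumr_ge0 => j _; rewrite sqr_ge0.
  rewrite /dot; apply: ler_sum => j _; rewrite -expr2.
  have yy : dot y y <= 1.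
    have y1' : enorm y <= 1 := y1.
    rewrite -enorm_sq expr2 -[1]mulr1; apply: ler_pM => //; exact: enorm_ge0.
  have hyj : `|(y *m A) ord0 j| <= \sum_(i < m) 2 * `|A i j|.
    rewrite mxE; apply: le_trans (ler_norm_sum _ _ _) _.
    apply: ler_sum => i _; rewrite normrM ler_wpM2r //.
    have := abs_le_sq1 (y ord0 i); have := coord_sq_le y i; lra.
  rewrite -[X in X <= _]real_normK ?num_real //.
  rewrite expr2 [X in _ <= X]expr2; apply: ler_pM => //; exact: normr_ge0.
have [e0|en0] := eqVneq (enorm x) 0.
  by rewrite (enorm0_eq e0) mul0mx /enorm !dot0l sqrtr0 mulr0.
have ep : 0 < enorm x by rewrite lt_neqAle eq_sym en0 enorm_ge0.
have h : E (enorm ((enorm x)^-1 *: x *m A)).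
  exists ((enorm x)^-1 *: x) => //=.
  by rewrite enorm_scale ger0_norm ?invr_ge0 ?enorm_ge0 // mulVf.
have := ub_le_sup hub h.
rewrite -scalemxAl enorm_scale ger0_norm ?invr_ge0 ?enorm_ge0 //.
by move=> hh; rewrite mulrC ler_pdivrMr // in hh.
Qed.


Lemma Psi_fin n k (A : 'M[R]_(n, k)) G h S x z u d g :
  Psi A G h S x z u d g \is a fin_num ->
  S x /\ exists a, G z = a%:E /\ Psi A G h S x z u d g =
     (dot z (x *m A) - a + h x + d / 2 * enorm (x - u) ^+ 2 - g / 2 * enorm z ^+ 2)%:E.
Proof.
rewrite /Psi !fin_numD fin_numN => /andP[/andP[/andP[/andP[/andP[_ Gf] _] If] _] _].
have Sx : S x.
  by move: If; rewrite /Defs.indic; case: (asboolP (S x)).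
split => //.
have [a Ga] := EFin_fin_numP _ Gf.
exists a; split => //.
by rewrite Ga /Defs.indic (asboolT Sx) adde0 -!EFinN -!EFinD.
Qed.

Lemma ratio_fin (P F : \bar R) : 0 < fine P / fine F -> P \is a fin_num.
Proof. by case: P => //=; rewrite mul0r ltxx. Qed.

Lemma xstep n (x0 x1 u0 c : 'rV[R]_n) d : 0 < d ->
  dot (x1 - (u0 - d^-1 *: c)) (x1 - (u0 - d^-1 *: c)) + dot (x0 - x1) (x0 - x1)
    <= dot (x0 - (u0 - d^-1 *: c)) (x0 - (u0 - d^-1 *: c)) ->
  d / 2 * dot (x1 - u0) (x1 - u0) + dot c (x1 - x0) + d / 2 * dot (x0 - x1) (x0 - x1)
    <= d / 2 * dot (x0 - u0) (x0 - u0).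
Proof.
move=> d0.
have E w : w - (u0 - d^-1 *: c) = (w - u0) + d^-1 *: c by apply/rowP => i; rewrite !mxE; ring.
rewrite !E !dot_expand => H.
have e : dot c (x1 - x0) = dot (x1 - u0) c - dot (x0 - u0) c.
  by rewrite dotC -dotBl; congr dot; rewrite opprB addrA subrK.
rewrite e.
have := ler_wpM2l (_ : 0 <= d / 2) H.
have dd : d * d^-1 = 1 by rewrite divff // gt_eqF.
move=> /(_ ltac:(rewrite divr_ge0 // ltW //)).
set A1 := dot (x1 - u0) (x1 - u0); set A0 := dot (x0 - u0) (x0 - u0).
set B1 := dot (x1 - u0) c; set B0 := dot (x0 - u0) c; set Cc := dot c c.
set Dx := dot (x0 - x1) (x0 - x1).
have -> : d / 2 * (A1 + 2 * d^-1 * B1 + d^-1 ^+ 2 * Cc + Dx) =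
   d / 2 * A1 + B1 + d^-1 / 2 * Cc + d / 2 * Dx by field; rewrite gt_eqF.
have -> : d / 2 * (A0 + 2 * d^-1 * B0 + d^-1 ^+ 2 * Cc) =
   d / 2 * A0 + B0 + d^-1 / 2 * Cc by field; rewrite gt_eqF.
lra.
Qed.

Lemma ustep n (x1 u0 : 'rV[R]_n) b : 0 < b ->
  dot (x1 - ((1 - b) *: u0 + b *: x1)) (x1 - ((1 - b) *: u0 + b *: x1)) =
  dot (x1 - u0) (x1 - u0) - (2 - b) / b * dot (u0 - ((1 - b) *: u0 + b *: x1)) (u0 - ((1 - b) *: u0 + b *: x1)).
Proof.
move=> b0.
have e1 : x1 - ((1 - b) *: u0 + b *: x1) = (1 - b) *: (x1 - u0).
  by apply/rowP => i; rewrite !mxE; ring.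
have e2 : u0 - ((1 - b) *: u0 + b *: x1) = (- b) *: (x1 - u0).
  by apply/rowP => i; rewrite !mxE; ring.
rewrite e1 e2 !dotZl !dotZr.
by field; rewrite gt_eqF.
Qed.


Lemma dot_swap m (a b : 'rV[R]_m) : dot (a - b) (a - b) = dot (b - a) (b - a).
Proof. by rewrite -opprB dotNl dotNr opprK. Qed.

Lemma zstep k (z0 z1 a0v a1v : 'rV[R]_k) (a0 a1 g : R) : 0 < g ->
  a0 + g / 2 * dot (z0 - g^-1 *: a0v) (z0 - g^-1 *: a0v) + g / 2 * dot (z1 - z0) (z1 - z0)
    <= a1 + g / 2 * dot (z1 - g^-1 *: a0v) (z1 - g^-1 *: a0v) ->
  a1 + g / 2 * dot (z1 - g^-1 *: a1v) (z1 - g^-1 *: a1v) + g / 2 * dot (z0 - z1) (z0 - z1)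
    <= a0 + g / 2 * dot (z0 - g^-1 *: a1v) (z0 - g^-1 *: a1v) ->
  (dot z1 a1v - a1 - g / 2 * dot z1 z1) - (dot z0 a0v - a0 - g / 2 * dot z0 z0)
   <= dot z0 (a1v - a0v) + g^-1 * dot (a1v - a0v) (a1v - a0v) - g / 2 * dot (z0 - z1) (z0 - z1).
Proof.
move=> g0.
have E z a : g / 2 * dot (z - g^-1 *: a) (z - g^-1 *: a) =
    g / 2 * dot z z - dot z a + g^-1 / 2 * dot a a.
  rewrite -scaleNr dot_expand; field; by rewrite gt_eqF.
rewrite !E (dot_swap z1 z0) => H1 H2.
have hy := young (z1 - z0) (a1v - a0v) g0.
rewrite (dot_swap z1 z0) in hy.
have e3 : (2 * g)^-1 = g^-1 / 2 by rewrite invfM mulrC.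
rewrite e3 in hy.
move: H1 H2 hy.
set D := dot (z0 - z1) (z0 - z1).
have e4 : dot (z1 - z0) (a1v - a0v) = dot z1 a1v - dot z1 a0v - dot z0 a1v + dot z0 a0v.
  by rewrite !dotBl !dotBr; ring.
have e5 : dot z0 (a1v - a0v) = dot z0 a1v - dot z0 a0v by rewrite dotBr.
rewrite e4 e5.
set W := dot (a1v - a0v) (a1v - a0v).
lra.
Qed.


Lemma core n k p (A : 'M[R]_(n, k)) (K : 'M[R]_(n, p)) (x0 x1 u0 gh0 : 'rV[R]_n)
  (z0 z1 : 'rV[R]_k) (y : 'rV[R]_p) (a0 a1 h0 h1 th d g nu L b nA : R) :
  0 < g -> 0 < b -> d = 2 * nu + L + 2 * nA ^+ 2 / g ->
  d / 2 * dot (x1 - u0) (x1 - u0) + dot (gh0 + z0 *m A^T - th *: (y *m K^T)) (x1 - x0)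
     + d / 2 * dot (x0 - x1) (x0 - x1) <= d / 2 * dot (x0 - u0) (x0 - u0) ->
  h1 <= h0 + dot gh0 (x1 - x0) + L / 2 * dot (x1 - x0) (x1 - x0) ->
  (dot z1 (x1 *m A) - a1 - g / 2 * dot z1 z1) - (dot z0 (x0 *m A) - a0 - g / 2 * dot z0 z0)
   <= dot z0 (x1 *m A - x0 *m A) + g^-1 * dot (x1 *m A - x0 *m A) (x1 *m A - x0 *m A)
      - g / 2 * dot (z0 - z1) (z0 - z1) ->
  dot ((x1 - x0) *m A) ((x1 - x0) *m A) <= nA ^+ 2 * dot (x1 - x0) (x1 - x0) ->
  dot z1 (x1 *m A) - a1 + h1 + d / 2 * dot (x1 - ((1 - b) *: u0 + b *: x1)) (x1 - ((1 - b) *: u0 + b *: x1))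
    - g / 2 * dot z1 z1
  <= dot z0 (x0 *m A) - a0 + h0 + d / 2 * dot (x0 - u0) (x0 - u0) - g / 2 * dot z0 z0
     + th * dot y ((x1 - x0) *m K)
     - (nu * dot (x0 - x1) (x0 - x1)
        + d * (2 - b) / (2 * b) * dot (u0 - ((1 - b) *: u0 + b *: x1)) (u0 - ((1 - b) *: u0 + b *: x1))
        + g / 2 * dot (z0 - z1) (z0 - z1)).
Proof.
move=> g0 b0 Hd HX HH HZ Hop.
rewrite (ustep _ _ b0).
set u1 := (1 - b) *: u0 + b *: x1.
set duu := dot (u0 - u1) (u0 - u1).
rewrite -mulmxBl in HZ.
rewrite (dot_swap x1 x0) in HH Hop.
set dxx := dot (x0 - x1) (x0 - x1) in HX HH Hop *.
have ec : dot (gh0 + z0 *m A^T - th *: (y *m K^T)) (x1 - x0) =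
   dot gh0 (x1 - x0) + dot z0 ((x1 - x0) *m A) - th * dot y ((x1 - x0) *m K).
  by rewrite !dotDl dotNl dotZl -!dot_mulmx.
rewrite ec in HX.
have hW : g^-1 * dot ((x1 - x0) *m A) ((x1 - x0) *m A) <= g^-1 * (nA ^+ 2 * dxx).
  by apply: ler_wpM2l => //; rewrite invr_ge0 ltW.
have ed : d / 2 * dxx = nu * dxx + L / 2 * dxx + g^-1 * (nA ^+ 2 * dxx).
  by rewrite Hd; field; rewrite gt_eqF.
have eu : d / 2 * (dot (x1 - u0) (x1 - u0) - (2 - b) / b * duu) =
     d / 2 * dot (x1 - u0) (x1 - u0) - d * (2 - b) / (2 * b) * duu.
  by field; rewrite gt_eqF.
rewrite eu.
lra.
Qed.

End Aux.
Unset Implicit Arguments. Set Strict Implicit. Set Printing Implicit Defensive.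

Theorem theorem5p2 (R : realType) (n s p : nat)
  (S : set 'rV[R]_n) (A : 'M[R]_(n, s)) (K : 'M[R]_(n, p))
  (g : 'rV[R]_s -> \bar R) (h : 'rV[R]_n -> R) (gradh : 'rV[R]_n -> 'rV[R]_n)
  (U : set 'rV[R]_n) (L : R) (f : 'rV[R]_p -> \bar R) (ell : R)
  (* S nonempty, convex, compact *)
  (HS0 : S !=set0) (HSconv : convex.convex_set S) (HScpt : compact S)
  (* g proper convex lsc *)
  (Hgp : proper_fun g) (Hgc : convex_fun g) (Hgl : lower_semicontinuous g)
  (* h differentiable on an open set U containing S, with L-Lipschitz gradient there *)
  (HUo : open U) (HSU : S `<=` U)
  (Hhd : forall x, U x -> differentiable h x /\ forall v, 'D_v h x = dot (gradh x) v)
  (HL0 : 0 <= L)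
  (HLip : forall x w, U x -> U w -> enorm (gradh x - gradh w) <= L * enorm (x - w))
  (* f proper convex lsc, K(S) in int dom f, f(Kx) > 0 on S *)
  (Hfp : proper_fun f) (Hfc : convex_fun f) (Hfl : lower_semicontinuous f)
  (HKS : forall x, S x -> (interior (dom f)) (x *m K))
  (Hfpos : forall x, S x -> (0 < f (x *m K))%E)
  (* domain / infimum conditions *)
  (Hdomg : exists2 x, S x & dom g (x *m A))
  (Hinf : (0 < ereal_inf [set g (x *m A) + (h x)%:E | x in S])%E)
  (Hsub : forall x, S x -> exists w, subdiff g (x *m A) w)
  (Hell : 0 < ell)
  (Hdist : forall x, S x -> dist0 [set w | subdiff g (x *m A) w] <= ell)
  (* parameters *)
  (beta nu q delta0 theta0 eps : R)
  (Hbeta : 0 < beta < 2) (Hnu : 0 < nu) (Hq : 0 < q < 1)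
  (Hdelta0 : 0 < delta0) (Htheta0 : 0 < theta0) (Heps : 0 < eps)
  (* iterates generated by the algorithm *)
  (x u : nat -> 'rV[R]_n) (z : nat -> 'rV[R]_s) (y : nat -> 'rV[R]_p)
  (gam del th : nat -> R)
  (Hrun : alg_run S A K g h gradh L f beta nu q delta0 theta0 eps x u z y gam del th)
  (* eventual stabilization *)
  (gamma : R) (K0 : nat) (Hgamma : 0 < gamma)
  (Hstab : forall k, (K0 <= k)%N ->
     [/\ gam k = gamma,
         del k = 2 * nu + L + 2 * opnorm A ^+ 2 / gamma &
         enorm (z k.+1) <= Num.min (eps / gamma) (Num.sqrt (2 * eps / gamma))]) :
  let delta := 2 * nu + L + 2 * opnorm A ^+ 2 / gamma in
  let c1 := nu in
  let c2 := delta * (2 - beta) / (2 * beta) in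
  let c3 := gamma / 2 in
  let PSI k := Psi A (fconj g) h S (x k) (z k) (u k) delta gamma in
  let D k := c1 * enorm (x k - x k.+1) ^+ 2 + c2 * enorm (u k - u k.+1) ^+ 2
             + c3 * enorm (z k - z k.+1) ^+ 2 in
  forall k, (K0.+1 <= k)%N ->
    (PSI k.+1 + (th k)%:E * f (x k *m K)
       - (th k)%:E * ((dot (x k.+1 *m K) (y k.+1))%:E - fconj f (y k.+1))
     <= PSI k - (D k)%:E)%E
    /\ (PSI k.+1 - (th k)%:E * f (x k.+1 *m K) <= - (D k)%:E)%E.
Proof.
move=> delta c1 c2 c3 PSI D k Hk.
case: Hrun => _ _ _ Hstep.
have q0 : 0 <= q by case/andP: Hq => /ltW.
have q1 : q < 1 by case/andP: Hq.
have stepz : forall m, gam m = gamma -> gam m.+1 = gamma ->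
    z m.+1 = prox (fconj g) gamma^-1 (gamma^-1 *: (x m.+1 *m A)) /\
    th m.+1 = fine (Psi A (fconj g) h S (x m.+1) (z m.+1) (u m.+1) (del m) gamma)
              / fine (f (x m.+1 *m K)) /\ 0 < th m.+1.
  move=> m gm gm1.
  case: (Hstep m) => _ _ _ [j [_ Hpos [Hz Hth] Hg _]].
  rewrite gm1 gm in Hg.
  have gn0 : gamma != 0 by rewrite gt_eqF.
  have j0 : j = 0%N.
    move: Hg; case: ifP => _ Hg.
      have e : gamma * (1 - q ^+ j.+1) = 0 by rewrite mulrBr mulr1 exprSr mulrA -Hg subrr.
      move/eqP: e; rewrite mulf_eq0 (negbTE gn0) /= subr_eq0 => /eqP e.
      by have := exprn_ilt1 j.+1 q0 q1; rewrite -e ltxx.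
    have e : gamma * (1 - q ^+ j) = 0 by rewrite mulrBr mulr1 -Hg subrr.
    move/eqP: e; rewrite mulf_eq0 (negbTE gn0) /= subr_eq0 => /eqP e.
    have := exprn_ilt1 j q0 q1; rewrite -e ltxx.
    by case: j {Hz Hth Hpos Hg e} => //.
  subst j; rewrite gm expr0 mulr1 in Hz Hth Hpos.
  rewrite -Hz in Hth Hpos; split => //; split => //; by rewrite Hth.
case: k Hk => // k' Hk.
have Hk1 : (K0 <= k'.+1)%N by apply: leqW.
have [gk' dk' _] := Hstab k' Hk.
have [gk dk _] := Hstab k'.+1 Hk1.
have [gk2 _ _] := Hstab k'.+2 (leqW Hk1).
have [Hz0 [Hth0 Hpos0]] := stepz k' gk' gk.
have [Hz1 [Hth1 Hpos1]] := stepz k'.+1 gk gk2.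
rewrite dk' -/delta in Hth0; rewrite dk -/delta in Hth1.
have Pf0 : Psi A (fconj g) h S (x k'.+1) (z k'.+1) (u k'.+1) delta gamma \is a fin_num.
  by apply: (@ratio_fin _ _ (f (x k'.+1 *m K))); rewrite -Hth0.
have Pf1 : Psi A (fconj g) h S (x k'.+2) (z k'.+2) (u k'.+2) delta gamma \is a fin_num.
  by apply: (@ratio_fin _ _ (f (x k'.+2 *m K))); rewrite -Hth1.
have [Sx0 [a0 [Ga0 EP0]]] := Psi_fin Pf0.
have [Sx1 [a1 [Ga1 EP1]]] := Psi_fin Pf1.
have fpos : forall w, S w -> exists fv, f (w *m K) = fv%:E /\ 0 < fv.
  move=> w Sw; have := Hfpos w Sw; have := interior_subset (HKS w Sw).
  rewrite /dom /=; case: (f (w *m K)) => [r| |] //=.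
  by move=> _; rewrite lte_fin => r0; exists r.
have [fv0 [Ef0 fv0p]] := fpos _ Sx0.
have [fv1 [Ef1 fv1p]] := fpos _ Sx1.
rewrite EP0 Ef0 /= in Hth0.
have d0 : 0 < delta.
  rewrite /delta; have : 0 <= 2 * opnorm A ^+ 2 / gamma.
    by apply: divr_ge0; [apply: mulr_ge0 => //; exact: sqr_ge0 | exact: ltW].
  lra.
case: (Hstep k'.+1) => Hsd Hx1 Hu1 _.
rewrite dk -/delta in Hx1.
set x0 := x k'.+1 in Hx1 Sx0 EP0 Ef0 Hz0 Hsd *.
set x1 := x k'.+2 in Hx1 Sx1 EP1 Ef1 Hz1 Hu1 *.
set u0 := u k'.+1 in Hx1 EP0 Hu1 *.
set u1 := u k'.+2 in EP1 Hu1 *.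
set z0 := z k'.+1 in Hx1 EP0 Ga0 Hz0 *.
set z1 := z k'.+2 in EP1 Ga1 Hz1 *.
set yy := y k'.+2 in Hx1 Hsd *.
set th0 := th k'.+1 in Hx1 Hth0 *.
set vv := (u0 + _ - _ - _) in Hx1.
have [_ Hpj] := proj_prop vv HScpt HS0 HSconv.
have HX0 := Hpj x0 Sx0; rewrite -Hx1 in HX0.
have ev : vv = u0 - delta^-1 *: (gradh x0 + z0 *m A^T - th0 *: (yy *m K^T)).
  rewrite /vv; set P1 := yy *m K^T; set P2 := gradh x0; set P3 := z0 *m A^T.
  by apply/rowP => i; rewrite !mxE; field; rewrite gt_eqF.
rewrite ev in HX0.
have HX := xstep d0 HX0.
have HH : h x1 <= h x0 + dot (gradh x0) (x1 - x0) + L / 2 * dot (x1 - x0) (x1 - x0).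
  apply: (h_descent Hhd HLip HL0) => t t01.
  apply: HSU.
  have -> : x0 + t *: (x1 - x0) = t *: x1 + (1 - t) *: x0.
    by apply/rowP => i; rewrite !mxE; ring.
  exact: convS.
have Hz0' := Hz0; have Hz1' := Hz1.
have H1 := @prox_3pt _ _ g gamma (gamma^-1 *: (x0 *m A)) z1 a0 a1 Hgamma Hgp.
rewrite -Hz0 in H1; have {H1}H1 := H1 Ga0 Ga1.
have H2 := @prox_3pt _ _ g gamma (gamma^-1 *: (x1 *m A)) z0 a1 a0 Hgamma Hgp.
rewrite -Hz1 in H2; have {H2}H2 := H2 Ga1 Ga0.
have HZ := zstep Hgamma H1 H2.
have Hop : dot ((x1 - x0) *m A) ((x1 - x0) *m A) <= opnorm A ^+ 2 * dot (x1 - x0) (x1 - x0).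
  have hb := opnorm_bound A (x1 - x0).
  rewrite -!enorm_sq !expr2 mulrACA.
  by apply: ler_pM => //; exact: enorm_ge0.
have beta0 : 0 < beta by case/andP: Hbeta.
have Hc := @core _ _ _ _ A K x0 x1 u0 (gradh x0) z0 z1 yy a0 a1 (h x0) (h x1) th0 delta gamma nu L beta (opnorm A) Hgamma beta0 erefl HX HH HZ Hop.
rewrite -Hu1 in Hc.
case: Hsd => _ Hsub0.
have Efc : fconj f yy = (dot (x0 *m K) yy - fv0)%:E.
  apply/eqP; rewrite eq_le; apply/andP; split.
    apply: ge_ereal_sup => _ [v _ <-].
    have := Hsub0 v; rewrite Ef0; move: (Hfp.2 v).
    case: (f v) => [r| |] //=.
      by move=> _; rewrite -EFinD !lee_fin dotBr (dotC yy v) (dotC yy); lra.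
    by move=> _ _; rewrite leNye.
  by have := fconj_ge f (x0 *m K) yy; rewrite Ef0.
have Hsg : fv0 + dot yy (x1 *m K - x0 *m K) <= fv1.
  by have := Hsub0 (x1 *m K); rewrite Ef0 Ef1 -EFinD lee_fin.
have eP0 : dot z0 (x0 *m A) - a0 + h x0 + delta / 2 * enorm (x0 - u0) ^+ 2 - gamma / 2 * enorm z0 ^+ 2
   = th0 * fv0 by rewrite Hth0 divfK // gt_eqF.
rewrite /PSI /D /c1 /c2 /c3 EP0 EP1 Efc Ef0 Ef1.
rewrite -/x0 -/x1 -/u0 -/u1 -/z0 -/z1.
do 3 rewrite -?EFinM -?EFinB -?EFinN -?EFinD.
rewrite !lee_fin.
rewrite !enorm_sq in eP0 *.
rewrite mulmxBl (dotBr (x1 *m K)) in Hc.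
rewrite (dotBr (x1 *m K)) in Hsg.
have th0p : 0 < th0 := Hpos0.
have Hm := ler_wpM2l (ltW th0p) Hsg.
rewrite (dotC yy (x1 *m K)) (dotC yy (x0 *m K)) in Hc Hm.
split; lra.
Qed.
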